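(* Fix $\mu \in \mathcal{X}$ and let $P_X$ be a probability distribution on $\mathcal{X}$ with $P_X(\{ \mu \}) = 0$. Let $(\mu_n)$ be a sequence in $\mathcal{X}$ with $d(\mu_n, \mu) \to 0$. Then $D(\mu_n; P_X) \to D(\mu; P_X)$ as $n \to \infty$.
   Context: $(\mathcal{X}, d)$ is a complete separable metric space with its Borel $\sigma$-algebra. Define $h: \mathcal{X}^3 \to \mathbb{R}$ by $h(x_1, x_2, x_3) := \mathbb{I}( x_3 \notin \{x_1, x_2\} ) \dfrac{ d^2(x_1, x_3) + d^2(x_2, x_3) - d^2(x_1, x_2) }{d(x_1, x_3)\, d(x_2, x_3) }$, where $h := 0$ when $x_3 \in \{x_1,x_2\}$. The metric spatial depth of $\mu \in \mathcal{X}$ with respect to a probability distribution $P_X$ on $\mathcal{X}$ is $D(\mu; P_X) := 1 - \frac{1}{2} \mathrm{E} \{ h(X_1, X_2, \mu) \}$, where $X_1, X_2 \sim P_X$ are independent. *)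

(* Defs.v *)
From HB Require Import structures.
From mathcomp Require Import all_boot all_order all_algebra.
From mathcomp Require Import all_classical all_reals all_analysis.
Set Implicit Arguments. Unset Strict Implicit. Unset Printing Implicit Defensive.
Import Order.TTheory GRing.Theory Num.Theory.
Import numFieldNormedType.Exports.
Local Open Scope classical_set_scope.
Local Open Scope ring_scope.

Definition is_metric {R : realType} {T : Type} (d : T -> T -> R) : Prop :=
  [/\ forall x y, 0 <= d x y,
      forall x y, d x y = 0 <-> x = y,
      forall x y, d x y = d y x &
      forall x y z, d x z <= d x y + d y z].

Definition metric_complete {R : realType} {T : Type} (d : T -> T -> R) : Prop :=
  forall u : nat -> T,
    (forall e : R, 0 < e -> exists N : nat, forall m n : nat,
        (N <= m)%N -> (N <= n)%N -> d (u m) (u n) < e) ->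
    exists l : T, (fun n => d (u n) l) @ \oo --> (0 : R).

Definition metric_separable {R : realType} {T : Type} (d : T -> T -> R) : Prop :=
  exists s : nat -> T, forall (x : T) (e : R), 0 < e -> exists n, d x (s n) < e.

Definition metric_open {R : realType} {T : Type} (d : T -> T -> R) (A : set T) : Prop :=
  forall x, A x -> exists e : R, 0 < e /\ forall y, d x y < e -> A y.

Definition borel_of {R : realType} {dT : measure_display} {T : measurableType dT}
  (d : T -> T -> R) : Prop :=
  (@measurable dT T) = <<s metric_open d >>.

Definition msd_h {R : realType} {T : Type} (d : T -> T -> R) (x1 x2 x3 : T) : R :=
  if pselect (x3 = x1 \/ x3 = x2) then 0
  else ((d x1 x3) ^+ 2 + (d x2 x3) ^+ 2 - (d x1 x2) ^+ 2) / (d x1 x3 * d x2 x3).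

(* Metric spatial depth D(mu; P) = 1 - 1/2 E[h(X1, X2, mu)],
   X1, X2 iid ~ P, i.e. the expectation is w.r.t. the product measure P x P. *)
Definition msdepth {R : realType} {dT : measure_display} {T : measurableType dT}
  (d : T -> T -> R) (P : probability T R) (mu : T) : \bar R :=
  (1%:E - (2^-1)%:E * \int[(P \x P)%E]_z (msd_h d z.1 z.2 mu)%:E)%E.

(* Main.v *)
Require Import Defs.
From HB Require Import structures.
From mathcomp Require Import all_boot all_order all_algebra.
From mathcomp Require Import all_classical all_reals all_analysis.
From mathcomp Require Import lra measurable_realfun.
Import Order.TTheory GRing.Theory Num.Theory.
Import numFieldNormedType.Exports.
Local Open Scope classical_set_scope.
Local Open Scope ring_scope.
Set Implicit Arguments. Unset Strict Implicit.

Section S.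
Variables (R : realType) (T : Type) (d : T -> T -> R) (hd : is_metric d).

Lemma msd_hE x y z : msd_h d x y z =
  ((d x z) ^+ 2 + (d y z) ^+ 2 - (d x y) ^+ 2) / (d x z * d y z).
Proof.
rewrite /msd_h; case: pselect => [[] e|_] /=; [rewrite e..|by []].
  by have [_ /(_ x x) [_ ->] // _ _] := hd; rewrite ?mul0r ?invr0 ?mulr0.
by have [_ /(_ y y) [_ ->] // _ _] := hd; rewrite ?mulr0 ?invr0 ?mulr0.
Qed.

Lemma msd_h_bound x y z : `|msd_h d x y z| <= 2.
Proof.
rewrite msd_hE; have [d0 _ dC dT] := hd.
set a := d x z; set b := d y z; set c := d x y.
have a0 : 0 <= a by apply: d0.
have b0 : 0 <= b by apply: d0.
have c1 : c <= a + b by rewrite /c /a /b (dC y z); apply: dT.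
have c2 : a <= c + b by rewrite /c /a /b; apply: dT.
have c3 : b <= c + a by rewrite /c /a /b (dC x y); apply: dT.
have [->|ab0] := eqVneq (a * b) 0; first by rewrite invr0 mulr0 normr0.
have abp : 0 < a * b by rewrite lt0r ab0 mulr_ge0.
rewrite normrM normfV (gtr0_norm abp) ler_pdivrMr //.
rewrite ler_norml; apply/andP; split; nra.
Qed.
End S.

Lemma real_meas (R : realType) d' (T' : measurableType d') (f : T' -> R) :
  (forall r, measurable [set x | f x < r]) -> measurable_fun setT f.
Proof.
move=> H; apply: (measurability _ (measurable_realfun.RGenInftyO.measurableE R)) => //.
move=> _ [_ [x ->] <-]; rewrite setTI.
suff -> : f @^-1` `]-oo, x[ = [set y | f y < x] by [].
by apply/seteqP; split => y /=; rewrite in_itv.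
Qed.

Lemma inv_meas (R : realType) : measurable_fun setT (@GRing.inv R).
Proof.
have -> : [set: R] = ~` [set 0] `|` [set 0] by rewrite setvU.
apply/measurable_funU => //; first exact: measurableC.
split; last exact: measurable_fun_set1.
apply: measurable_realfun.open_continuous_measurable_fun.
  exact/closed_openC/accessible_closed_set1/hausdorff_accessible/Rhausdorff.
by move=> x; rewrite inE /= => /eqP x0; apply: inv_continuous.
Qed.

Lemma lt_meas (R : realType) d' (T' : measurableType d') (f : T' -> R) r :
  measurable_fun setT f -> measurable [set x | f x < r].
Proof.
move=> mf; have := mf measurableT _ (measurable_itv `]-oo, r[).
rewrite setTI; congr measurable; apply/seteqP; split => y /=; by rewrite in_itv.
Qed.

Section M.
Variables (R : realType) (dT : measure_display) (T : measurableType dT)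
  (d : T -> T -> R) (hd : is_metric d) (hsep : metric_separable d)
  (hborel : borel_of d).

Lemma ball_meas m r : measurable [set x | d x m < r].
Proof.
have -> : @measurable _ T = _ := hborel; apply: sub_sigma_algebra.
move=> x /= xr; exists (r - d x m); split; first by rewrite subr_gt0.
have [_ _ dC dT'] := hd.
move=> y xy; have := dT' y x m; rewrite (dC y x); lra.
Qed.

Lemma dm_meas m : measurable_fun setT (fun x => d x m).
Proof. by apply: real_meas => r; exact: ball_meas. Qed.

Lemma dpair_meas : measurable_fun setT (fun z : T * T => d z.1 z.2).
Proof.
have [s hs] := hsep; have [d0 _ dC dT'] := hd.
apply: real_meas => r.
have -> : [set z : T * T | d z.1 z.2 < r] =
   \bigcup_n [set z : T * T | d z.1 (s n) + d z.2 (s n) < r].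
  apply/seteqP; split => [z /= zr|z [n _ /=]].
    have [n hn] := hs z.2 ((r - d z.1 z.2) / 2) ltac:(rewrite divr_gt0 // subr_gt0 //).
    exists n => //=; have := dT' z.1 z.2 (s n); lra.
  have := dT' z.1 (s n) z.2; rewrite (dC (s n) z.2); lra.
apply: bigcupT_measurable => n; apply: lt_meas; apply: measurable_funD.
  exact: measurableT_comp (dm_meas _) measurable_fst.
exact: measurableT_comp (dm_meas _) measurable_snd.
Qed.

Lemma set1_meas (m : T) : measurable [set m].
Proof.
have := dm_meas m (@measurableT _ T) (measurable_set1 (0:R)).
have [_ hz _ _] := hd.
rewrite setTI; congr measurable; apply/seteqP; split => y /=.
  by move/(proj1 (hz y m)).
by move=> ->; apply/(hz m m).
Qed.

Lemma h_meas m : measurable_fun setT (fun z : T * T => msd_h d z.1 z.2 m).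
Proof.
have -> : (fun z : T * T => msd_h d z.1 z.2 m) = (fun z =>
   (d z.1 m ^+ 2 + d z.2 m ^+ 2 - d z.1 z.2 ^+ 2) * (d z.1 m * d z.2 m)^-1).
  by apply/funext => z; rewrite msd_hE.
have m1 : measurable_fun setT (fun z : T * T => d z.1 m).
  exact: measurableT_comp (dm_meas _) measurable_fst.
have m2 : measurable_fun setT (fun z : T * T => d z.2 m).
  exact: measurableT_comp (dm_meas _) measurable_snd.
have m3 := dpair_meas.
apply: measurable_funM.
  apply: measurable_funB; last exact: measurable_funX.
  by apply: measurable_funD; exact: measurable_funX.
apply: (measurableT_comp (@inv_meas R)).
exact: measurable_funM.
Qed.
End M.


Lemma dist_cvg (R : realType) (T : Type) (d : T -> T -> R) (hd : is_metric d)
  (mu : T) (mu_ : nat -> T) (hmu : (fun n => d (mu_ n) mu) @ \oo --> (0 : R)) x :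
  (fun n => d x (mu_ n)) @ \oo --> d x mu.
Proof.
have [_ _ dC dT] := hd.
apply: (@squeeze_cvgr _ _ _ _ (fun n => d x mu - d (mu_ n) mu)
  (fun n => d x mu + d (mu_ n) mu)).
- apply: nearW => n; apply/andP; split.
    have := dT x (mu_ n) mu; lra.
  have := dT x mu (mu_ n); rewrite (dC mu (mu_ n)); lra.
- by rewrite -[X in _ --> X]subr0; apply: cvgB => //; exact: cvg_cst.
- by rewrite -[X in _ --> X]addr0; apply: cvgD => //; exact: cvg_cst.
Qed.

Lemma h_cvg (R : realType) (T : Type) (d : T -> T -> R) (hd : is_metric d)
  (mu : T) (mu_ : nat -> T) (hmu : (fun n => d (mu_ n) mu) @ \oo --> (0 : R)) x y :
  x <> mu -> y <> mu ->
  (fun n => msd_h d x y (mu_ n)) @ \oo --> msd_h d x y mu.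
Proof.
move=> xm ym; have [d0 dz dC _] := hd.
rewrite (msd_hE hd); under eq_fun do rewrite (msd_hE hd).
have ax : (fun n => d x (mu_ n)) @ \oo --> d x mu := @dist_cvg _ _ _ hd _ _ hmu _.
have ay : (fun n => d y (mu_ n)) @ \oo --> d y mu := @dist_cvg _ _ _ hd _ _ hmu _.
apply: cvgM.
  apply: cvgB; last exact: cvg_cst.
  by rewrite !expr2; apply: cvgD; apply: cvgM.
apply: cvgV; last exact: cvgM.
rewrite mulf_neq0 //; apply/eqP => /dz ?; [exact: xm | exact: ym].
Qed.

Unset Implicit Arguments. Set Strict Implicit.

Theorem theorem6 (R : realType) (dT : measure_display) (T : measurableType dT)
  (d : T -> T -> R)
  (hd : is_metric d) (hcomp : metric_complete d) (hsep : metric_separable d)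
  (hborel : borel_of d)
  (P : probability T R) (mu : T) (hP : P [set mu] = 0%E)
  (mu_ : nat -> T) (hmu : (fun n => d (mu_ n) mu) @ \oo --> (0 : R)) :
  (fun n => msdepth d P (mu_ n)) @ \oo --> msdepth d P mu.
Proof.
pose f_ n (z : T * T) := (msd_h d z.1 z.2 (mu_ n))%:E.
pose f (z : T * T) := (msd_h d z.1 z.2 mu)%:E.
pose g (z : T * T) := (EFin \o cst (2 : R)) z.
pose N := [set mu] `*` [set: T] `|` [set: T] `*` [set mu].
have m1 := set1_meas hd hborel mu.
have mN : measurable N.
  by apply: measurableU; apply: measurableX.
have N0 : (P \x P)%E N = 0%E.
  apply: null_set_setU; try exact: measurableX.
    transitivity (P [set mu] * P setT)%E; first exact: product_measure1E.
    by rewrite hP mul0e.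
  transitivity (P setT * P [set mu])%E; first exact: product_measure1E.
  by rewrite hP mule0.
have mf_ n : measurable_fun setT (f_ n).
  by apply/measurable_EFinP; exact: h_meas.
have mf : measurable_fun setT f.
  by apply/measurable_EFinP; exact: h_meas.
have ig : (P \x P)%E.-integrable setT g.
  apply/integrableP; split; first exact/measurable_EFinP/measurable_cst.
  have PT : (P \x P)%E setT = 1%E.
    rewrite -setXTT; transitivity (P setT * P setT)%E; first exact: product_measure1E.
    by rewrite probability_setT mul1e.
  rewrite (eq_integral (fun=> 2%:E)); last first.
    by move=> z _; rewrite /g /= normr_nat.
  rewrite integral_cst //; set M := (X in (_ * X)%E).
  have -> : M = 1%E by exact: PT.
  by rewrite mule1 ltry.
have f_f : {ae (P \x P)%E, forall x, setT x -> f_ ^~ x @ \oo --> f x}.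
  exists N; split => // z /= hz; apply: contrapT => Nz; apply: hz => _.
  apply: cvg_EFin; first exact: nearW.
  apply: h_cvg => // e; apply: Nz; rewrite /N /=; rewrite -e; by [left|right].
have f_g : {ae (P \x P)%E, forall x n, setT x -> (`|f_ n x| <= g x)%E}.
  apply: nearW => z n _; rewrite /g /f_ /= lee_fin; exact: msd_h_bound.
have [intf _ cvgI] := dominated_convergence measurableT mf_ mf f_f ig f_g.
rewrite /msdepth; apply: cvgeB.
- by rewrite fin_num_adde_defr // fin_numN fin_numM // integrable_fin_num.
- exact: cvg_cst.
- apply: cvgeZl => //; exact: cvgI.
Qed.
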